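(* Let $a,c,p\in\mathbb{C}$ with $-c\notin\mathbb{N}\cup\{0\}$ and $c\neq2$. Write $\cosh(pz)M(a,c;z)=\sum_{n=0}^\infty u_nz^n$, $z\in\mathbb{C}$. Then $u_0=1$, $u_1=\frac ac$, $u_2=\frac{a(a+1)}{2c(c+1)}+\frac{p^2}{2}$, $u_3=\frac{ap^2}{2c}+\frac{a(a+1)(a+2)}{6c(c+1)(c+2)}$, $u_4=\frac{a(a+1)p^2}{4c(c+1)}+\frac{a(a+1)(a+2)(a+3)}{24c(c+1)(c+2)(c+3)}+\frac{p^4}{24}$, $u_5=\frac{ap^4}{24c}+\frac{a(a+1)(a+2)p^2}{12c(c+1)(c+2)}+\frac{a(a+1)(a+2)(a+3)(a+4)}{120c(c+1)(c+2)(c+3)(c+4)}$, and for all integers $n\ge5$, \[ u_{n+1}=\sum_{i=0}^5\beta_i(n)u_{n-i}, \] where, with $D(n)=(c-2)c\,n(n+1)(c+n-1)(c+n)$, \[ \beta_0(n)=\frac{2\left(a\left(c^2-2cn+c-2(n-2)^2\right)+c(n-1)(2c+n-5)\right)}{(c-2)c(n+1)(c+n)}, \] \[ \beta_1(n)=\frac{1}{D(n)}\Big[(n-4)(n-3)(n-2)(n-1)(4p^2-1)+2(n-3)(n-2)(n-1)\big(4a+c(4p^2-3)\big) +(n-2)(n-1)\big(8a^2+a(4c+6)+c(6(c-2)p^2-6c+1)\big) +2(n-1)\big(a^2(4c-2)-3a(c-1)c+(c-2)c(c+1)p^2\big) +(c-2)\big(-a^2(c+2)+ac+c^2(c+1)p^2\big)\Big],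 \] \[ \beta_2(n)=\frac{1}{D(n)}\Big[2p^2(c-3)\big(a(3c+8)-2c^2+c-32\big)+2p^2\big(n(10a+c(31-3c)-104)-6(c-6)n^2-4n^3\big) -2(a+n-3)\big(2a^2-a(c-2n+3)-(n-2)(2c+n-4)\big)\Big], \] \[ \beta_3(n)=-\frac{1}{D(n)}\Big[p^2\big(-12a^2+2a(6c+5)-6c^2+c\big)+2(n-3)\big(a+c(4p^2-3)p^2\big) +(a-1)a+5(c-2)cp^4+(n-4)(n-3)(8p^4-6p^2+1)\Big], \] \[ \beta_4(n)=\frac{2p^2\left(p^2(-6a+5c+4(n-4))+3a-2c-n+4\right)}{D(n)},\qquad \beta_5(n)=\frac{4p^6-5p^4+p^2}{D(n)}. \]
   Context: For $a\in\mathbb{C}$, $(a)_n=a(a+1)\cdots(a+n-1)$ denotes the Pochhammer symbol, with $(a)_0=1$. For $a,c\in\mathbb{C}$ with $-c\notin\mathbb{N}\cup\{0\}$, the confluent hypergeometric (Kummer) function is $M(a,c;z)=\sum_{n=0}^\infty \frac{(a)_n}{(c)_n\,n!}z^n$, $z\in\mathbb{C}$. *)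

(* Defs.v *)
From Stdlib Require Import Reals Factorial.
From Coquelicot Require Import Coquelicot.
Open Scope C_scope.

Definition Cn (n : nat) : C := RtoC (INR n).

Fixpoint poch (a : C) (n : nat) : C :=
  match n with
  | O => 1
  | S m => poch a m * (a + Cn m)
  end.

Definition Cfact (n : nat) : C := Cn (fact n).

Definition Cpsum (coef : nat -> C) (z : C) : C :=
  lim (T := C_CompleteNormedModule)
      (filtermap (fun N => sum_n (fun k => coef k * z ^ k) N) eventually).

Definition kummer_coef (a c : C) (n : nat) : C :=
  poch a n / (poch c n * Cfact n).

Definition KummerM (a c z : C) : C := Cpsum (kummer_coef a c) z.

Definition Cexp (w : C) : C := Cpsum (fun k => 1 / Cfact k) w.
Definition Ccosh (w : C) : C := (Cexp w + Cexp (- w)) / RtoC 2%R.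

Definition Dn (a c p : C) (n : nat) : C :=
  let N := Cn n in (c - Cn 2) * c * N * (N + 1) * (c + N - 1) * (c + N).

Definition beta0 (a c p : C) (n : nat) : C :=
  let N := Cn n in
  Cn 2 * (a * (c ^ 2 - Cn 2 * c * N + c - Cn 2 * (N - Cn 2) ^ 2)
           + c * (N - 1) * (Cn 2 * c + N - Cn 5))
  / ((c - Cn 2) * c * (N + 1) * (c + N)).

Definition beta1 (a c p : C) (n : nat) : C :=
  let N := Cn n in
  ((N - Cn 4) * (N - Cn 3) * (N - Cn 2) * (N - 1) * (Cn 4 * p ^ 2 - 1)
   + Cn 2 * (N - Cn 3) * (N - Cn 2) * (N - 1) * (Cn 4 * a + c * (Cn 4 * p ^ 2 - Cn 3))
   + (N - Cn 2) * (N - 1)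
       * (Cn 8 * a ^ 2 + a * (Cn 4 * c + Cn 6)
          + c * (Cn 6 * (c - Cn 2) * p ^ 2 - Cn 6 * c + 1))
   + Cn 2 * (N - 1)
       * (a ^ 2 * (Cn 4 * c - Cn 2) - Cn 3 * a * (c - 1) * c
          + (c - Cn 2) * c * (c + 1) * p ^ 2)
   + (c - Cn 2) * (- a ^ 2 * (c + Cn 2) + a * c + c ^ 2 * (c + 1) * p ^ 2))
  / Dn a c p n.

Definition beta2 (a c p : C) (n : nat) : C :=
  let N := Cn n in
  (Cn 2 * p ^ 2 * (c - Cn 3) * (a * (Cn 3 * c + Cn 8) - Cn 2 * c ^ 2 + c - Cn 32)
   + Cn 2 * p ^ 2 * (N * (Cn 10 * a + c * (Cn 31 - Cn 3 * c) - Cn 104)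
                     - Cn 6 * (c - Cn 6) * N ^ 2 - Cn 4 * N ^ 3)
   - Cn 2 * (a + N - Cn 3)
       * (Cn 2 * a ^ 2 - a * (c - Cn 2 * N + Cn 3) - (N - Cn 2) * (Cn 2 * c + N - Cn 4)))
  / Dn a c p n.

Definition beta3 (a c p : C) (n : nat) : C :=
  let N := Cn n in
  - ((p ^ 2 * (- (Cn 12 * a ^ 2) + Cn 2 * a * (Cn 6 * c + Cn 5) - Cn 6 * c ^ 2 + c)
      + Cn 2 * (N - Cn 3) * (a + c * (Cn 4 * p ^ 2 - Cn 3) * p ^ 2)
      + (a - 1) * a + Cn 5 * (c - Cn 2) * c * p ^ 4
      + (N - Cn 4) * (N - Cn 3) * (Cn 8 * p ^ 4 - Cn 6 * p ^ 2 + 1))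
     / Dn a c p n).

Definition beta4 (a c p : C) (n : nat) : C :=
  let N := Cn n in
  Cn 2 * p ^ 2 * (p ^ 2 * (- (Cn 6 * a) + Cn 5 * c + Cn 4 * (N - Cn 4))
                  + Cn 3 * a - Cn 2 * c - N + Cn 4)
  / Dn a c p n.

Definition beta5 (a c p : C) (n : nat) : C :=
  (Cn 4 * p ^ 6 - Cn 5 * p ^ 4 + p ^ 2) / Dn a c p n.

Definition beta (a c p : C) (i n : nat) : C :=
  match i with
  | 0 => beta0 a c p n
  | 1 => beta1 a c p n
  | 2 => beta2 a c p n
  | 3 => beta3 a c p n
  | 4 => beta4 a c p n
  | _ => beta5 a c p n
  end.

(* Main.v *)
Require Import Defs.
From Stdlib Require Import Reals.
From Coquelicot Require Import Coquelicot.
Open Scope C_scope.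
From Stdlib Require Import Lia Lra Factorial.
Open Scope C_scope.

Lemma Cn_S k : Cn (S k) = Cn k + 1.
Proof. unfold Cn. rewrite S_INR. now rewrite RtoC_plus. Qed.
Lemma Cn_0 : Cn 0 = 0.
Proof. reflexivity. Qed.
Lemma Cn_plus m n : Cn (m + n) = Cn m + Cn n.
Proof. unfold Cn. rewrite plus_INR. now rewrite RtoC_plus. Qed.
Lemma Cn_mult m n : Cn (m * n) = Cn m * Cn n.
Proof. unfold Cn. rewrite mult_INR. now rewrite RtoC_mult. Qed.
Lemma Cn_nz k : k <> 0%nat -> Cn k <> 0.
Proof. intros H E. apply (f_equal fst) in E. simpl in E. exact (not_0_INR k H E). Qed.
Lemma Cfact_nz k : Cfact k <> 0.
Proof. unfold Cfact. apply Cn_nz. apply fact_neq_0. Qed.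
Lemma Cfact_S k : Cfact (S k) = Cn (S k) * Cfact k.
Proof. unfold Cfact. rewrite <- Cn_mult. reflexivity. Qed.

Fixpoint csum (f : nat -> C) (n : nat) : C :=
  match n with O => f O | S m => csum f m + f (S m) end.

Lemma csum_ext (f g : nat -> C) n :
  (forall j, (j <= n)%nat -> f j = g j) -> csum f n = csum g n.
Proof.
  induction n; intros H; simpl. apply H; lia.
  rewrite IHn by (intros; apply H; lia). rewrite (H (S n)) by lia. reflexivity.
Qed.
Lemma csum_first f n : csum f (S n) = f O + csum (fun j => f (S j)) n.
Proof.
  induction n. simpl. reflexivity.
  change (csum f (S (S n))) with (csum f (S n) + f (S (S n))).
  rewrite IHn. simpl. ring.
Qed.
Lemma csum_plus f g n : csum (fun j => f j + g j) n = csum f n + csum g n.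
Proof. induction n; simpl. reflexivity. rewrite IHn. ring. Qed.
Lemma csum_scal (l : C) f n : csum (fun j => l * f j) n = l * csum f n.
Proof. induction n; simpl. reflexivity. rewrite IHn. ring. Qed.

Definition conv (x y : nat -> C) (n : nat) : C :=
  csum (fun k => x k * y (n - k)%nat) n.
Definition Dq (x : nat -> C) (k : nat) : C := Cn (S k) * x (S k).

Lemma conv_prod x y k :
  Cn (S k) * conv x y (S k) = conv (Dq x) y k + conv x (Dq y) k.
Proof.
  unfold conv.
  rewrite <- csum_scal.
  rewrite (csum_ext _ (fun j => Cn j * (x j * y (S k - j)%nat)
                 + (Cn (S k) - Cn j) * (x j * y (S k - j)%nat))) by (intros; ring).
  rewrite csum_plus. f_equal.
  - rewrite csum_first. rewrite Cn_0. unfold Dq.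
    rewrite Cmult_0_l, Cplus_0_l. apply csum_ext. intros j Hj.
    simpl (S k - S j)%nat. ring.
  - change (csum (fun j : nat => (Cn (S k) - Cn j) * (x j * y (S k - j)%nat)) (S k))
      with (csum (fun j : nat => (Cn (S k) - Cn j) * (x j * y (S k - j)%nat)) k
            + (Cn (S k) - Cn (S k)) * (x (S k) * y (S k - S k)%nat)).
    replace (Cn (S k) - Cn (S k)) with (RtoC 0) by ring.
    rewrite Cmult_0_l, Cplus_0_r.
    apply csum_ext. intros j Hj. unfold Dq.
    replace (S k - j)%nat with (S (k - j)) by lia.
    replace (Cn (S k)) with (Cn j + Cn (S (k - j))).
    ring. rewrite <- Cn_plus. f_equal. lia.
Qed.

Lemma conv_shift (x s r : nat -> C) k :
  s O = 0 -> (forall i, s (S i) = r i) -> conv x s (S k) = conv x r k.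
Proof.
  intros H0 HS. unfold conv.
  change (csum (fun k0 : nat => x k0 * s (S k - k0)%nat) (S k)) with
    (csum (fun k0 : nat => x k0 * s (S k - k0)%nat) k + x (S k) * s (S k - S k)%nat).
  rewrite Nat.sub_diag, H0, Cmult_0_r, Cplus_0_r.
  apply csum_ext. intros j Hj.
  replace (S k - j)%nat with (S (k - j)) by lia. now rewrite HS.
Qed.

Lemma conv_lin_r (x y z : nat -> C) (al be : C) k :
  conv x (fun i => al * y i + be * z i) k = al * conv x y k + be * conv x z k.
Proof.
  unfold conv. rewrite <- !csum_scal, <- csum_plus.
  apply csum_ext. intros; ring.
Qed.

Lemma conv_scal_l (l : C) (x y : nat -> C) k : conv (fun i => l * x i) y k = l * conv x y k.
Proof.
  unfold conv. rewrite <- csum_scal. apply csum_ext. intros; ring.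
Qed.

Lemma conv_ext (x x' y y' : nat -> C) k :
  (forall i, x i = x' i) -> (forall i, y i = y' i) -> conv x y k = conv x' y' k.
Proof.
  intros Hx Hy. unfold conv. apply csum_ext. intros. now rewrite Hx, Hy.
Qed.

Lemma conv_kummer (x m : nat -> C) (a c : C)
  (hK : forall j, (c + Cn j) * Dq m j = (a + Cn j) * m j) k :
  (Cn (S k) + c) * conv x (Dq m) (S k)
  = conv (Dq x) (Dq m) k + conv x (Dq m) k + a * conv x m (S k).
Proof.
  set (s := fun i => c * Dq m i + (- a) * m i).
  assert (E1 : conv x s (S k) = conv x (fun i => 1 * Dq m i + (-1) * Dq (Dq m) i) k).
  { apply conv_shift.
    - unfold s. pose proof (hK O) as H. rewrite Cn_0 in H.
      replace (c * Dq m O + - a * m O) with ((c + 0) * Dq m O - (a + 0) * m O) by ring.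
      rewrite H. ring.
    - intros i. unfold s. pose proof (hK (S i)) as H.
      change (Dq (Dq m) i) with (Cn (S i) * Dq m (S i)).
      change (Dq m i) with (Cn (S i) * m (S i)).
      replace (c * Dq m (S i)) with ((c + Cn (S i)) * Dq m (S i) - Cn (S i) * Dq m (S i)) by ring.
      rewrite H. ring. }
  unfold s in E1. rewrite !conv_lin_r in E1.
  pose proof (conv_prod x (Dq m) k) as E2.
  replace ((Cn (S k) + c) * conv x (Dq m) (S k)) with
    (Cn (S k) * conv x (Dq m) (S k) + (c * conv x (Dq m) (S k) + - a * conv x m (S k)) + a * conv x m (S k)) by ring.
  rewrite E1, E2. ring.
Qed.

Definition ee (p : C) (k : nat) : C := (p ^ k + (- p) ^ k) / (RtoC 2 * Cfact k).

Lemma two_nz : RtoC 2 <> 0.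
Proof. intros E. apply (f_equal fst) in E. simpl in E. lra. Qed.

Lemma ee_DD p k : Dq (Dq (ee p)) k = p ^ 2 * ee p k.
Proof.
  unfold Dq, ee. rewrite !Cfact_S, !Cpow_S.
  pose proof (Cn_nz (S k) ltac:(lia)). pose proof (Cn_nz (S (S k)) ltac:(lia)).
  pose proof (Cfact_nz k). pose proof two_nz.
  field. auto.
Qed.

Lemma Cplus_Cn_nz (c : C) (hc : forall k : nat, c <> - Cn k) j : c + Cn j <> 0.
Proof.
  intros E. apply (hc j). replace c with (c + Cn j - Cn j) by ring. rewrite E. ring.
Qed.

Lemma Cmult_nz (x y : C) : x <> 0 -> y <> 0 -> x * y <> 0.
Proof.
  intros Hx Hy E. apply Hy. replace y with (/ x * (x * y)) by (field; auto).
  rewrite E. ring.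
Qed.

Lemma poch_nz (c : C) (hc : forall k : nat, c <> - Cn k) n : poch c n <> 0.
Proof.
  induction n; simpl.
  - intros E. apply (f_equal fst) in E. simpl in E. lra.
  - apply Cmult_nz; auto. now apply Cplus_Cn_nz.
Qed.

Lemma kummer_rel (a c : C) (hc : forall k : nat, c <> - Cn k) j :
  (c + Cn j) * Dq (kummer_coef a c) j = (a + Cn j) * kummer_coef a c j.
Proof.
  unfold Dq, kummer_coef. rewrite Cfact_S.
  change (poch a (S j)) with (poch a j * (a + Cn j)).
  change (poch c (S j)) with (poch c j * (c + Cn j)).
  pose proof (Cn_nz (S j) ltac:(lia)). pose proof (Cfact_nz j).
  pose proof (poch_nz c hc j). pose proof (Cplus_Cn_nz c hc j).
  field. auto.
Qed.



Lemma sum_n_5 (f : nat -> C) : sum_n f 5 = f O + f 1%nat + f 2%nat + f 3%nat + f 4%nat + f 5%nat.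
Proof. rewrite !sum_Sn, sum_O. reflexivity. Qed.

Lemma rec_alg (a c p : C) (F G H W : nat -> C)
  (hc : forall k : nat, c <> - Cn k) (hc2 : c <> Cn 2)
  (R1 : forall k, Cn (S k) * F (S k) = G k + H k)
  (R2 : forall k, Cn (S k) * G (S k) = p ^ 2 * F k + W k)
  (R3 : forall k, (Cn (S k) + c) * H (S k) = W k + H k + a * F (S k))
  (R4 : forall k, (Cn (S k) + c) * W (S k) = p ^ 2 * H k + W k + a * G (S k))
  (n : nat) (hn : (5 <= n)%nat) :
  F (S n) = sum_n (fun i => beta a c p i n * F (n - i)%nat) 5.
Proof.
  assert (hF : forall k, F (S k) = (G k + H k) / (Cn k + 1)).
  { intros k. rewrite <- R1, Cn_S. field. rewrite <- Cn_S. apply Cn_nz. lia. }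
  assert (hG : forall k, G (S k) = (p ^ 2 * F k + W k) / (Cn k + 1)).
  { intros k. rewrite <- R2, Cn_S. field. rewrite <- Cn_S. apply Cn_nz. lia. }
  assert (hH : forall k, H (S k) = (W k + H k + a * F (S k)) / (Cn k + 1 + c)).
  { intros k. rewrite <- R3, Cn_S. field. rewrite <- Cn_S, Cplus_comm. now apply Cplus_Cn_nz. }
  assert (hW : forall k, W (S k) = (p ^ 2 * H k + W k + a * G (S k)) / (Cn k + 1 + c)).
  { intros k. rewrite <- R4, Cn_S. field. rewrite <- Cn_S, Cplus_comm. now apply Cplus_Cn_nz. }
  clear R1 R2 R3 R4.
  destruct n as [|[|[|[|[|N]]]]]; try lia.
  rewrite sum_n_5. cbn [Nat.sub beta].
  unfold beta0, beta1, beta2, beta3, beta4, beta5, Dn; cbv zeta.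
  repeat (rewrite hF || rewrite hG || rewrite hH || rewrite hW).
  pose proof (fun j => Cplus_Cn_nz c hc j) as hcj.
  assert (hc0 : c <> 0) by (pose proof (hcj O) as h; rewrite Cn_0, Cplus_0_r in h; exact h).
  assert (hc2' : c - Cn 2 <> 0) by (intros E; apply hc2; replace c with (c - Cn 2 + Cn 2) by ring; rewrite E; ring).
  pose proof (hcj (S N)) as c1. pose proof (hcj (S (S N))) as c2.
  pose proof (hcj (S (S (S N)))) as c3. pose proof (hcj (S (S (S (S N))))) as c4.
  pose proof (hcj (S (S (S (S (S N)))))) as c5. pose proof (hcj (S (S (S (S (S (S N))))))) as c6.
  pose proof (Cn_nz (S N) ltac:(lia)) as n1. pose proof (Cn_nz (S (S N)) ltac:(lia)) as n2.
  pose proof (Cn_nz (S (S (S N))) ltac:(lia)) as n3. pose proof (Cn_nz (S (S (S (S N)))) ltac:(lia)) as n4.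
  pose proof (Cn_nz (S (S (S (S (S N))))) ltac:(lia)) as n5. pose proof (Cn_nz (S (S (S (S (S (S N)))))) ltac:(lia)) as n6.
  clear hcj hF hG hH hW hc.
  rewrite !Cn_S, !Cn_0 in *.
  replace (N - 0)%nat with N by lia.
  generalize dependent (Cn N); intros X; intros.
  match goal with |- ?A = ?B => change (@eq C A B) end.
  field; repeat split; cbv beta;
  match goal with |- ?E <> _ =>
    match goal with h : ?Y <> _ |- _ =>
      let Ez := fresh in intros Ez; apply h; transitivity E; [ring | rewrite Ez; ring] end end.
Qed.

Section Rels.
Variables (a c p : C).
Hypothesis hc : forall k : nat, c <> - Cn k.
Let e := ee p.
Let m := kummer_coef a c.

Lemma main_rec (n : nat) (hc2 : c <> Cn 2) (hn : (5 <= n)%nat) :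
  conv e m (S n) = sum_n (fun i => beta a c p i n * conv e m (n - i)%nat) 5.
Proof.
  apply (rec_alg a c p _ (conv (Dq e) m) (conv e (Dq m)) (conv (Dq e) (Dq m)) hc hc2); auto.
  - intros k. apply conv_prod.
  - intros k. rewrite conv_prod. f_equal.
    rewrite <- conv_scal_l. apply conv_ext; auto. intros i. apply ee_DD.
  - intros k. apply (conv_kummer _ _ a c). apply kummer_rel; auto.
  - intros k. rewrite (conv_kummer _ _ a c) by (apply kummer_rel; auto).
    f_equal. f_equal. rewrite <- conv_scal_l. apply conv_ext; auto. intros i. apply ee_DD.
Qed.

Ltac initv :=
  unfold conv, e, m, ee, kummer_coef, Cfact; cbn [csum Nat.sub poch Cpow fact Nat.mul Nat.add];
  pose proof (Cplus_Cn_nz c hc) as hcj;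
  pose proof (hcj O) as h0; pose proof (hcj 1%nat) as h1; pose proof (hcj 2%nat) as h2;
  pose proof (hcj 3%nat) as h3; pose proof (hcj 4%nat) as h4; clear hcj;
  rewrite ?Cn_S, ?Cn_0 in *; field;
  repeat split; cbv beta;
  match goal with |- ?E <> _ =>
    match goal with h : ?Y <> _ |- _ =>
      let Ez := fresh in intros Ez; apply h; transitivity E; [ring | rewrite Ez; ring] end end.

Lemma init0 : conv e m O = 1.
Proof. initv. Qed.
Lemma init1 : conv e m 1 = a / c.
Proof. initv. Qed.
Lemma init2 : conv e m 2 = a * (a + 1) / (Cn 2 * c * (c + 1)) + p ^ 2 / Cn 2.
Proof. initv. Qed.
Lemma init3 : conv e m 3 = a * p ^ 2 / (Cn 2 * c)
            + a * (a + 1) * (a + Cn 2) / (Cn 6 * c * (c + 1) * (c + Cn 2)).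
Proof. initv. Qed.
Lemma init4 : conv e m 4 = a * (a + 1) * p ^ 2 / (Cn 4 * c * (c + 1))
            + a * (a + 1) * (a + Cn 2) * (a + Cn 3)
              / (Cn 24 * c * (c + 1) * (c + Cn 2) * (c + Cn 3))
            + p ^ 4 / Cn 24.
Proof. initv. Qed.
Lemma init5 : conv e m 5 = a * p ^ 4 / (Cn 24 * c)
            + a * (a + 1) * (a + Cn 2) * p ^ 2 / (Cn 12 * c * (c + 1) * (c + Cn 2))
            + a * (a + 1) * (a + Cn 2) * (a + Cn 3) * (a + Cn 4)
              / (Cn 120 * c * (c + 1) * (c + Cn 2) * (c + Cn 3) * (c + Cn 4)).
Proof. initv. Qed.
End Rels.


Lemma Cpsum_correct (coef : nat -> C) (z l : C) :
  is_series (K := C_AbsRing) (V := C_NormedModule) (fun k => coef k * z ^ k) l ->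
  Cpsum coef z = l.
Proof.
  intros H. unfold Cpsum.
  set (F := filtermap (fun N => sum_n (fun k => coef k * z ^ k) N) eventually).
  assert (PF : ProperFilter F) by (apply filtermap_proper_filter; apply eventually_filter).
  assert (Hl : is_filter_lim (T := C_UniformSpace) F l) by exact H.
  assert (HC : cauchy (T := C_UniformSpace) F).
  { intros eps. exists l. apply Hl. apply locally_ball. }
  assert (Hlim : is_filter_lim (T := C_UniformSpace) F (lim (T := C_CompleteNormedModule) F)).
  { intros P [eps Heps]. apply filter_imp with (2 := complete_cauchy (T := C_CompleteNormedModule) F PF HC eps).
    exact Heps. }
  apply (is_filter_lim_unique (K := C_AbsRing) (V := C_NormedModule) (F := F)); auto.

Qed.

Lemma pow_n_Cpow (z : C) k : pow_n (K := C_AbsRing) z k = z ^ k.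
Proof. induction k; simpl. reflexivity. rewrite IHk. reflexivity. Qed.

Lemma Re_sum_n (s : nat -> C) N :
  Re (sum_n (G := C_AbelianMonoid) s N) = sum_n (G := R_AbelianMonoid) (fun n => Re (s n)) N.
Proof.
  induction N. rewrite !sum_O. reflexivity.
  rewrite !sum_Sn, <- IHN. reflexivity.
Qed.
Lemma Im_sum_n (s : nat -> C) N :
  Im (sum_n (G := C_AbelianMonoid) s N) = sum_n (G := R_AbelianMonoid) (fun n => Im (s n)) N.
Proof.
  induction N. rewrite !sum_O. reflexivity.
  rewrite !sum_Sn, <- IHN. reflexivity.
Qed.

Lemma series_ReIm (s : nat -> C) (l : C) :
  is_series (K := C_AbsRing) (V := C_NormedModule) s l ->
  is_series (K := R_AbsRing) (V := R_NormedModule) (fun n => Re (s n)) (Re l) /\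
  is_series (K := R_AbsRing) (V := R_NormedModule) (fun n => Im (s n)) (Im l).
Proof.
  intros H. split.
  - unfold is_series.
    apply filterlim_ext with (fun N => Re (sum_n s N)).
    { intros N. apply Re_sum_n. }
    apply filterlim_comp with (1 := H).
    intros P [eps Heps]. exists eps. intros y Hy. apply Heps. exact (proj1 Hy).
  - unfold is_series.
    apply filterlim_ext with (fun N => Im (sum_n s N)).
    { intros N. apply Im_sum_n. }
    apply filterlim_comp with (1 := H).
    intros P [eps Heps]. exists eps. intros y Hy. apply Heps. exact (proj2 Hy).
Qed.

Lemma Re_mul_R (z : C) (r : R) : Re (z * RtoC r) = (Re z * r)%R.
Proof. destruct z as [x y]. unfold Re, Cmult, RtoC. simpl. ring. Qed.
Lemma Im_mul_R (z : C) (r : R) : Im (z * RtoC r) = (Im z * r)%R.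
Proof. destruct z as [x y]. unfold Im, Cmult, RtoC. simpl. ring. Qed.

Lemma series_ReIm_pow (x : nat -> C) (t : R) (l : C) :
  is_series (K := C_AbsRing) (V := C_NormedModule) (fun k => x k * RtoC t ^ k) l ->
  is_series (K := R_AbsRing) (V := R_NormedModule) (fun k => Re (x k) * t ^ k)%R (Re l) /\
  is_series (K := R_AbsRing) (V := R_NormedModule) (fun k => Im (x k) * t ^ k)%R (Im l).
Proof.
  intros H. destruct (series_ReIm _ _ H) as [H1 H2]. split.
  - eapply is_series_ext; [|exact H1]. intros k. simpl. rewrite <- RtoC_pow. apply Re_mul_R.
  - eapply is_series_ext; [|exact H2]. intros k. simpl. rewrite <- RtoC_pow. apply Im_mul_R.
Qed.

Lemma sum_pow_split (al be : nat -> R) (t : R) n :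
  sum_f_R0 (fun k => (al k * t ^ k) * (be (n - k)%nat * t ^ (n - k)))%R n
  = (sum_f_R0 (fun k => al k * be (n - k)%nat)%R n * t ^ n)%R.
Proof.
  rewrite (Rmult_comm (sum_f_R0 _ n) (t ^ n)), scal_sum. apply sum_eq. intros i Hi.
  replace (t ^ n)%R with (t ^ i * t ^ (n - i))%R by (rewrite <- pow_add; f_equal; lia).
  ring.
Qed.

Lemma Re_csum f n : Re (csum f n) = sum_f_R0 (fun k => Re (f k)) n.
Proof. induction n; simpl. reflexivity. rewrite <- IHn. reflexivity. Qed.
Lemma Im_csum f n : Im (csum f n) = sum_f_R0 (fun k => Im (f k)) n.
Proof. induction n; simpl. reflexivity. rewrite <- IHn. reflexivity. Qed.

Lemma abs_part (x : nat -> C) (t : R) (proj : C -> R)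
  (hp : forall z, Rabs (proj z) <= Cmod z) :
  ex_series (fun k => Cmod (x k) * Rabs t ^ k)%R ->
  ex_series (fun k => Rabs (proj (x k) * t ^ k))%R.
Proof.
  intros H. apply (ex_series_le (K := R_AbsRing) (V := R_CompleteNormedModule)) with (2 := H).
  intros k. change (norm (Rabs (proj (x k) * t ^ k))) with (Rabs (Rabs (proj (x k) * t ^ k))).
  rewrite Rabs_Rabsolu, Rabs_mult, <- RPow_abs.
  apply Rmult_le_compat_r. apply pow_le, Rabs_pos. apply hp.
Qed.

Lemma im_le_Cmod' (z : C) : Rabs (Im z) <= Cmod z.
Proof. eapply Rle_trans; [|apply Rmax_Cmod]. apply Rmax_r. Qed.

Lemma cprod (x y : nat -> C) (t : R) (lx ly : C) :
  is_series (K := C_AbsRing) (V := C_NormedModule) (fun k => x k * RtoC t ^ k) lx ->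
  is_series (K := C_AbsRing) (V := C_NormedModule) (fun k => y k * RtoC t ^ k) ly ->
  ex_series (fun k => Cmod (x k) * Rabs t ^ k)%R ->
  ex_series (fun k => Cmod (y k) * Rabs t ^ k)%R ->
  is_series (K := R_AbsRing) (V := R_NormedModule) (fun n => Re (conv x y n) * t ^ n)%R (Re (lx * ly)) /\
  is_series (K := R_AbsRing) (V := R_NormedModule) (fun n => Im (conv x y n) * t ^ n)%R (Im (lx * ly)).
Proof.
  intros Hx Hy Ax Ay.
  destruct (series_ReIm_pow _ _ _ Hx) as [Hxr Hxi].
  destruct (series_ReIm_pow _ _ _ Hy) as [Hyr Hyi].
  pose proof (abs_part x t Re re_le_Cmod Ax) as Axr.
  pose proof (abs_part x t Im im_le_Cmod' Ax) as Axi.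
  pose proof (abs_part y t Re re_le_Cmod Ay) as Ayr.
  pose proof (abs_part y t Im im_le_Cmod' Ay) as Ayi.
  pose proof (is_series_mult _ _ _ _ Hxr Hyr Axr Ayr) as Prr.
  pose proof (is_series_mult _ _ _ _ Hxi Hyi Axi Ayi) as Pii.
  pose proof (is_series_mult _ _ _ _ Hxr Hyi Axr Ayi) as Pri.
  pose proof (is_series_mult _ _ _ _ Hxi Hyr Axi Ayr) as Pir.
  split.
  - pose proof (is_series_minus _ _ _ _ Prr Pii) as P.
    replace (Re (lx * ly)) with (minus (Re lx * Re ly) (Im lx * Im ly))%R.
    2: { destruct lx, ly. unfold minus, plus, opp. simpl. ring. }
    eapply is_series_ext; [|exact P]. intros n. simpl.
    cbv beta. rewrite (sum_pow_split (fun k => Re (x k)) (fun k => Re (y k))),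
      (sum_pow_split (fun k => Im (x k)) (fun k => Im (y k))).
    unfold conv. rewrite Re_csum.
    unfold minus, plus, opp. simpl.
    match goal with |- (?A * _ + - (?B * _))%R = _ => transitivity ((A - B) * t ^ n)%R; [ring|] end.
    f_equal. rewrite <- minus_sum. apply sum_eq. intros i Hi. reflexivity.
  - pose proof (is_series_plus _ _ _ _ Pri Pir) as P.
    replace (Im (lx * ly)) with (plus (Re lx * Im ly) (Im lx * Re ly))%R.
    2: { destruct lx, ly. unfold plus. simpl. ring. }
    eapply is_series_ext; [|exact P]. intros n. simpl.
    cbv beta. rewrite (sum_pow_split (fun k => Re (x k)) (fun k => Im (y k))),
      (sum_pow_split (fun k => Im (x k)) (fun k => Re (y k))).
    unfold conv. rewrite Im_csum.
    unfold plus. simpl.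
    match goal with |- (?A * _ + ?B * _)%R = _ => transitivity ((A + B) * t ^ n)%R; [ring|] end.
    f_equal. rewrite <- plus_sum. apply sum_eq. intros i Hi. reflexivity.
Qed.

Lemma ps_uniq (x y : nat -> R) (L : R -> R) :
  (forall t, is_series (K := R_AbsRing) (V := R_NormedModule) (fun n => x n * t ^ n)%R (L t)) ->
  (forall t, is_series (K := R_AbsRing) (V := R_NormedModule) (fun n => y n * t ^ n)%R (L t)) ->
  forall n, x n = y n.
Proof.
  intros Hx Hy.
  assert (Ps : forall (z : nat -> R), (forall t, is_series (K := R_AbsRing) (V := R_NormedModule) (fun n => z n * t ^ n)%R (L t)) ->
     (forall t, PSeries z t = L t) /\ Rbar_lt 0 (CV_radius z)).
  { intros z Hz. split.
    - intros t. apply is_pseries_unique. unfold is_pseries.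
      eapply is_series_ext; [|apply (Hz t)]. intros k. simpl.
      change (scal (pow_n t k) (z k)) with (pow_n (K := R_AbsRing) t k * z k)%R.
      rewrite Rmult_comm. f_equal.
    - destruct (Rbar_lt_le_dec 0 (CV_radius z)) as [h|h]; auto.
      exfalso. apply (CV_disk_outside z 1).
      + eapply Rbar_le_lt_trans; [exact h|]. simpl. rewrite Rabs_R1. lra.
      + apply ex_series_lim_0. exists (L 1). exact (Hz 1). }
  destruct (Ps x Hx) as [Px Rx]. destruct (Ps y Hy) as [Py Ry].
  intros n. apply PSeries_ext_recip; auto.
  apply filter_forall. intros t. rewrite Px, Py. reflexivity.
Qed.

Lemma pow_n_R (r : R) k : pow_n (K := R_AbsRing) r k = (r ^ k)%R.
Proof. induction k; simpl. reflexivity. rewrite IHk. reflexivity. Qed.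

Lemma exp_abs (r : R) : ex_series (K := R_AbsRing) (V := R_NormedModule) (fun k => r ^ k * / INR (fact k))%R.
Proof.
  exists (exp r). pose proof (is_exp_Reals r) as H. unfold is_pseries in H.
  eapply is_series_ext; [|exact H]. intros k. cbv beta.
  rewrite pow_n_R. reflexivity.
Qed.

Lemma INR_fact_pos k : (0 < INR (fact k))%R.
Proof. apply lt_0_INR. apply lt_O_fact. Qed.

Lemma Cmod_Cfact k : Cmod (Cfact k) = INR (fact k).
Proof. unfold Cfact, Cn. rewrite Cmod_R. apply Rabs_pos_eq. apply pos_INR. Qed.

Lemma Cexp_series (w : C) :
  is_series (K := C_AbsRing) (V := C_NormedModule) (fun k => 1 / Cfact k * w ^ k) (Cexp w).
Proof.
  assert (Hex : ex_series (K := C_AbsRing) (V := C_CompleteNormedModule) (fun k => 1 / Cfact k * w ^ k)).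
  { apply ex_series_le with (2 := exp_abs (Cmod w)).
    intros k. change (Cmod (1 / Cfact k * w ^ k) <= Cmod w ^ k * / INR (fact k))%R. rewrite Cmod_mult, Cmod_div by apply Cfact_nz.
    rewrite Cmod_1, Cmod_Cfact, Cmod_pow. right. field. apply Rgt_not_eq, INR_fact_pos. }
  destruct Hex as [l Hl]. unfold Cexp. rewrite (Cpsum_correct _ _ l); exact Hl.
Qed.

Lemma cosh_series (p z : C) :
  is_series (K := C_AbsRing) (V := C_NormedModule) (fun k => ee p k * z ^ k) (Ccosh (p * z)).
Proof.
  pose proof (is_series_plus _ _ _ _ (Cexp_series (p * z)) (Cexp_series (- (p * z)))) as H.
  pose proof (is_series_scal (K := C_AbsRing) (V := C_NormedModule) (/ RtoC 2) _ _ H) as H2.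
  replace (Ccosh (p * z)) with (/ RtoC 2 * (Cexp (p * z) + Cexp (- (p * z)))).
  2: { unfold Ccosh. field. }
  eapply is_series_ext; [|exact H2]. intros k. cbv beta.
  change (scal (/ RtoC 2) (plus (1 / Cfact k * (p * z) ^ k) (1 / Cfact k * (- (p * z)) ^ k)))
    with (/ RtoC 2 * (1 / Cfact k * (p * z) ^ k + 1 / Cfact k * (- (p * z)) ^ k)).
  replace (- (p * z)) with ((- p) * z) by ring.
  rewrite !Cpow_mult_l. unfold ee.
  pose proof (Cfact_nz k). pose proof two_nz.
  match goal with |- ?A = ?B => change (@eq C A B) end. field. auto.
Qed.

Lemma Cmod_ee (p : C) k : (Cmod (ee p k) <= Cmod p ^ k * / INR (fact k))%R.
Proof.
  unfold ee. pose proof (Cfact_nz k). pose proof two_nz.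
  rewrite Cmod_div by (apply Cmult_nz; auto).
  rewrite Cmod_mult, Cmod_Cfact, Cmod_R, Rabs_pos_eq by lra.
  pose proof (INR_fact_pos k).
  apply Rle_trans with ((Cmod (p ^ k) + Cmod ((- p) ^ k)) / (2 * INR (fact k)))%R.
  - unfold Rdiv. apply Rmult_le_compat_r.
    + apply Rlt_le, Rinv_0_lt_compat. nra.
    + apply Cmod_triangle.
  - rewrite !Cmod_pow, Cmod_opp. right. field. lra.
Qed.

Lemma ee_abs (p : C) (r : R) (hr : (0 <= r)%R) :
  ex_series (K := R_AbsRing) (V := R_NormedModule) (fun k => Cmod (ee p k) * r ^ k)%R.
Proof.
  apply (ex_series_le (K := R_AbsRing) (V := R_CompleteNormedModule)) with (2 := exp_abs (Cmod p * r)).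
  intros k. change (norm (Cmod (ee p k) * r ^ k)%R) with (Rabs (Cmod (ee p k) * r ^ k)%R).
  rewrite Rabs_pos_eq by (apply Rmult_le_pos; [apply Cmod_ge_0 | apply pow_le; auto]).
  rewrite Rpow_mult_distr.
  replace (Cmod p ^ k * r ^ k * / INR (fact k))%R with ((Cmod p ^ k * / INR (fact k)) * r ^ k)%R by ring.
  apply Rmult_le_compat_r. apply pow_le; auto. apply Cmod_ee.
Qed.

Lemma Cmod_Cn j : Cmod (Cn j) = INR j.
Proof. unfold Cn. rewrite Cmod_R. apply Rabs_pos_eq, pos_INR. Qed.

Section Kum.
Variables (a c : C).
Hypothesis hc : forall k : nat, c <> - Cn k.

Lemma kummer_step j :
  kummer_coef a c (S j) = kummer_coef a c j * ((a + Cn j) / ((c + Cn j) * Cn (S j))).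
Proof.
  unfold kummer_coef. rewrite Cfact_S.
  change (poch a (S j)) with (poch a j * (a + Cn j)).
  change (poch c (S j)) with (poch c j * (c + Cn j)).
  pose proof (Cn_nz (S j) ltac:(lia)). pose proof (Cfact_nz j).
  pose proof (poch_nz c hc j). pose proof (Cplus_Cn_nz c hc j).
  field. auto.
Qed.

Lemma kummer_abs (r : R) (hr : (0 <= r)%R) :
  ex_series (K := R_AbsRing) (V := R_NormedModule) (fun j => Cmod (kummer_coef a c j) * r ^ j)%R.
Proof.
  set (b := fun j => (Cmod (kummer_coef a c j) * r ^ j)%R).
  assert (bpos : forall j, (0 <= b j)%R).
  { intros j. unfold b. apply Rmult_le_pos. apply Cmod_ge_0. apply pow_le; auto. }
  set (X := (2 * Cmod c + Cmod a + 8 * r + 1)%R).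
  assert (HX : (0 <= X)%R) by (unfold X; pose proof (Cmod_ge_0 c); pose proof (Cmod_ge_0 a); lra).
  destruct (nfloor_ex X HX) as [n0 Hn0].
  set (J := S n0).
  assert (step : forall j, (J <= j)%nat -> (b (S j) <= / 2 * b j)%R).
  { intros j Hj.
    assert (hx : (X < INR j)%R).
    { apply Rlt_le_trans with (INR J). unfold J. rewrite S_INR. lra. apply le_INR. exact Hj. }
    set (x := INR j) in *.
    set (s := Cmod (a + Cn j)). set (q := Cmod (c + Cn j)).
    assert (h1 : (s <= Cmod a + x)%R).
    { unfold s, x. rewrite <- Cmod_Cn. apply Cmod_triangle. }
    assert (h2 : (x - Cmod c <= q)%R).
    { unfold q, x. rewrite <- Cmod_Cn.
      replace (Cn j) with ((c + Cn j) + - c) at 1 by ring.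
      pose proof (Cmod_triangle (c + Cn j) (- c)). rewrite Cmod_opp in H. lra. }
    pose proof (Cmod_ge_0 c). pose proof (Cmod_ge_0 a).
    assert (hq : (0 < q)%R) by (unfold X in hx; lra).
    assert (key : (2 * r * s <= q * (x + 1))%R).
    { assert (k1 : (2 * r * s <= 4 * r * x)%R) by (unfold X in hx; nra).
      assert (k2 : (x / 2 * (x + 1) <= q * (x + 1))%R).
      { apply Rmult_le_compat_r. unfold x; pose proof (pos_INR j); lra. unfold X in hx; lra. }
      assert (k3 : (4 * r * x <= x / 2 * (x + 1))%R).
      { unfold X in hx. nra. }
      lra. }
    set (M := (Cmod (kummer_coef a c j) * r ^ j)%R).
    assert (hM : (0 <= M)%R) by apply bpos.
    assert (E : b (S j) = (M * r * s / (q * (x + 1)))%R).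
    { unfold b, M. rewrite kummer_step, Cmod_mult, Cmod_div.
      2: { apply Cmult_nz. apply Cplus_Cn_nz; auto. apply Cn_nz; lia. }
      rewrite Cmod_mult, Cmod_Cn, S_INR. fold s q x. simpl pow. field. lra. }
    rewrite E. fold (b j). change (b j) with M.
    assert (HQ : (0 < q * (x + 1))%R) by (unfold x; pose proof (pos_INR j); nra).
    apply (Rmult_le_reg_r (q * (x + 1))); auto.
    replace (M * r * s / (q * (x + 1)) * (q * (x + 1)))%R with (M * r * s)%R by (field; lra).
    assert (M * (2 * r * s) <= M * (q * (x + 1)))%R by (apply Rmult_le_compat_l; auto).
    lra. }
  assert (geom : forall i, (b (J + i)%nat <= b J * (/ 2) ^ i)%R).
  { induction i. rewrite Nat.add_0_r. simpl. lra.
    replace (J + S i)%nat with (S (J + i)) by lia.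
    eapply Rle_trans. apply step. lia. simpl.
    replace (b J * (/ 2 * (/ 2) ^ i))%R with (/ 2 * (b J * (/ 2) ^ i))%R by ring.
    apply Rmult_le_compat_l; [lra | exact IHi]. }
  apply (ex_series_incr_n b J).
  apply (ex_series_le (K := R_AbsRing) (V := R_CompleteNormedModule)) with (b := fun i => (b J * (/ 2) ^ i)%R).
  - intros i. change (norm (b (J + i)%nat)) with (Rabs (b (J + i)%nat)).
    rewrite Rabs_pos_eq by apply bpos. apply geom.
  - apply (ex_series_scal_l (K := R_AbsRing) (V := R_NormedModule)). apply ex_series_geom.
    rewrite Rabs_pos_eq by lra. lra.
Qed.

Lemma kummer_series (z : C) :
  is_series (K := C_AbsRing) (V := C_NormedModule) (fun k => kummer_coef a c k * z ^ k) (KummerM a c z).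
Proof.
  assert (Hex : ex_series (K := C_AbsRing) (V := C_CompleteNormedModule) (fun k => kummer_coef a c k * z ^ k)).
  { apply ex_series_le with (2 := kummer_abs (Cmod z) (Cmod_ge_0 z)).
    intros k. change (Cmod (kummer_coef a c k * z ^ k) <= Cmod (kummer_coef a c k) * Cmod z ^ k)%R.
    rewrite Cmod_mult, Cmod_pow. lra. }
  destruct Hex as [l Hl]. unfold KummerM. rewrite (Cpsum_correct _ _ l); exact Hl.
Qed.
End Kum.


Theorem theorem2p10 (a c p : C) (u : nat -> C)
  (hc : forall k : nat, c <> - Cn k)
  (hc2 : c <> Cn 2)
  (hu : forall z : C, is_pseries u z (Ccosh (p * z) * KummerM a c z)) :
  u 0%nat = 1 /\
  u 1%nat = a / c /\
  u 2%nat = a * (a + 1) / (Cn 2 * c * (c + 1)) + p ^ 2 / Cn 2 /\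
  u 3%nat = a * p ^ 2 / (Cn 2 * c)
            + a * (a + 1) * (a + Cn 2) / (Cn 6 * c * (c + 1) * (c + Cn 2)) /\
  u 4%nat = a * (a + 1) * p ^ 2 / (Cn 4 * c * (c + 1))
            + a * (a + 1) * (a + Cn 2) * (a + Cn 3)
              / (Cn 24 * c * (c + 1) * (c + Cn 2) * (c + Cn 3))
            + p ^ 4 / Cn 24 /\
  u 5%nat = a * p ^ 4 / (Cn 24 * c)
            + a * (a + 1) * (a + Cn 2) * p ^ 2 / (Cn 12 * c * (c + 1) * (c + Cn 2))
            + a * (a + 1) * (a + Cn 2) * (a + Cn 3) * (a + Cn 4)
              / (Cn 120 * c * (c + 1) * (c + Cn 2) * (c + Cn 3) * (c + Cn 4)) /\
  (forall n : nat, (5 <= n)%nat ->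
     u (S n) = sum_n (fun i => beta a c p i n * u (n - i)%nat) 5).
Proof.
  assert (Hconv : forall n, u n = conv (ee p) (kummer_coef a c) n).
  { intros n.
    assert (HR : forall t : R,
      is_series (K := R_AbsRing) (V := R_NormedModule) (fun n => Re (u n) * t ^ n)%R
        (Re (Ccosh (p * RtoC t) * KummerM a c (RtoC t))) /\
      is_series (K := R_AbsRing) (V := R_NormedModule) (fun n => Im (u n) * t ^ n)%R
        (Im (Ccosh (p * RtoC t) * KummerM a c (RtoC t)))).
    { intros t. pose proof (hu (RtoC t)) as H. unfold is_pseries in H.
      apply series_ReIm_pow. eapply is_series_ext; [|exact H]. intros k. cbv beta.
      rewrite pow_n_Cpow. change (RtoC t ^ k * u k = u k * RtoC t ^ k). ring. }
    assert (HC : forall t : R, _) by (intros t; exact (cprod (ee p) (kummer_coef a c) t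
        (Ccosh (p * RtoC t)) (KummerM a c (RtoC t)) (cosh_series p (RtoC t))
        (kummer_series a c hc (RtoC t)) (ee_abs p (Rabs t) (Rabs_pos t))
        (kummer_abs a c hc (Rabs t) (Rabs_pos t)))).
    apply injective_projections.
    - apply (ps_uniq (fun n => Re (u n)) (fun n => Re (conv (ee p) (kummer_coef a c) n))
        (fun t => Re (Ccosh (p * RtoC t) * KummerM a c (RtoC t)))); intros t.
      + apply HR.
      + apply HC.
    - apply (ps_uniq (fun n => Im (u n)) (fun n => Im (conv (ee p) (kummer_coef a c) n))
        (fun t => Im (Ccosh (p * RtoC t) * KummerM a c (RtoC t)))); intros t.
      + apply HR.
      + apply HC. }
  rewrite !Hconv.
  split. apply init0; auto.
  split. apply init1; auto.
  split. apply init2; auto.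
  split. apply init3; auto.
  split. apply init4; auto.
  split. apply init5; auto.
  intros n hn. rewrite Hconv.
  rewrite (main_rec a c p hc n hc2 hn).
  apply sum_n_ext. intros i. rewrite Hconv. reflexivity.
Qed.
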